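(* Let $G$ be a finite group and $H$ a normal subgroup of $G$ such that $G/H$ is cyclic. Suppose that the coset $Hx$ generates the quotient group $G/H$. Then the number of $G$-conjugacy classes contained in $Hx$ equals the number of integral $(G,H)$-classes contained in $H$.
   Context: For $g\in G$, the centralizing subgroup of $g$ with respect to $H$ is $HC_G(g)$; for a conjugacy class $X$ of $G$ it is $HC_G(g)$ for any $g\in X$. An integral $(G,H)$-class is a conjugacy class of $G$ whose centralizing subgroup with respect to $H$ is $G$ (equivalently, a $G$-class which does not split into several classes when the conjugation action is restricted to $H$). *)

(* Defs.v *)
From mathcomp Require Import all_boot all_fingroup all_solvable.
Set Implicit Arguments. Unset Strict Implicit. Unset Printing Implicit Defensive.
Local Open Scope group_scope.

Definition centralizing_subgroup (gT : finGroupType) (G H : {set gT}) (g : gT)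
  : {set gT} := H * 'C_G[g].

(* centralizing subgroup of a conjugacy class X : H C_G(g) for g \in X
   (we take the canonical representative repr X; independent of choice) *)
Definition class_centralizing_subgroup (gT : finGroupType) (G H X : {set gT})
  : {set gT} := centralizing_subgroup G H (repr X).

Definition integral_class (gT : finGroupType) (G H X : {set gT}) : bool :=
  (X \in classes G) && (class_centralizing_subgroup G H X == G).

(* Main.v *)
Require Import Defs.
From mathcomp Require Import all_boot all_fingroup all_solvable.
Set Implicit Arguments. Unset Strict Implicit. Unset Printing Implicit Defensive.
Local Open Scope group_scope.

Definition Aset (gT : finGroupType) (G H : {group gT}) (u : coset_of H) :=
  [set b in G | coset H b == u].

Lemma shift_card (gT : finGroupType) (G H : {group gT}) a c (u : coset_of H) :
  H <| G -> c \in G -> c \in 'C[a] ->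
  #|Aset G (coset H c * u) :&: 'C[a]| = #|Aset G u :&: 'C[a]|.
Proof.
move=> nHG Gc Cc; rewrite -[RHS](card_lcoset _ c); apply: eq_card => y.
rewrite mem_lcoset !in_setI (groupMl _ (groupVr Cc)) !inE (groupMl _ (groupVr Gc)).

case Gy: (y \in G) => //=.
have nG := normal_norm nHG.
rewrite morphM ?morphV ?groupV ?(subsetP nG) //.
congr (_ && _); rewrite /= -[coset H y](mulKVg (coset H c)).
by rewrite (inj_eq (mulgI _)) mulKVg.
Qed.

Lemma Aset1 (gT : finGroupType) (G H : {group gT}) :
  H <| G -> Aset G (1 : coset_of H) = H.
Proof.
move=> nHG; apply/setP => b; rewrite !inE; apply/andP/idP => [[Gb /eqP]|Hb].
  by apply: coset_idr; apply: (subsetP (normal_norm nHG)).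
by rewrite (subsetP (normal_sub nHG)) ?coset_id.
Qed.

Lemma pow_card (gT : finGroupType) (G H : {group gT}) a c j :
  H <| G -> c \in G -> c \in 'C[a] ->
  #|Aset G (coset H c ^+ j) :&: 'C[a]| = #|H :&: 'C[a]|.
Proof.
move=> nHG Gc Cc.
rewrite -(mulg1 (coset H c ^+ j)) -morphX ?(subsetP (normal_norm nHG)) //.
by rewrite shift_card ?groupX // Aset1.
Qed.

Lemma cardIC (gT : finType) (A B : {set gT}) :
  #|A :&: B| = \sum_(b in A) (b \in B).
Proof.
rewrite -sum1_card big_mkcond [RHS]big_mkcond; apply: eq_bigr => b _.
by rewrite inE; case: (b \in A); case: (b \in B).
Qed.

Lemma cent_decomp (gT : finGroupType) (G H : {group gT}) a :
  H <| G -> #|'C_G[a]| = \sum_(u in G / H) #|Aset G u :&: 'C[a]|.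
Proof.
move=> nHG; rewrite -sum1_card.
rewrite (partition_big (coset H) (mem (G / H))) /=; last first.
  by move=> b /setIP[Gb _]; apply: mem_quotient.
apply: eq_bigr => u _; rewrite -sum1_card; apply: eq_bigl => b.
by rewrite !inE andbAC.
Qed.
Lemma burnside_classes (gT : finGroupType) (G : {group gT}) (B : {set gT}) :
  B \subset G -> (forall a g, a \in B -> g \in G -> a ^ g \in B) ->
  (#|[set C in classes G | C \subset B]| * #|G|)%N = \sum_(a in B) #|'C_G[a]|.
Proof.
move=> sBG stB.
rewrite (partition_big (fun a => a ^: G) (mem [set C in classes G | C \subset B])) /=; last first.
  move=> a Ba; rewrite inE mem_classes ?(subsetP sBG) //=.
  by apply/subsetP => y /imsetP [g Gg ->]; apply: stB.
rewrite -sum_nat_const; apply: eq_bigr => C; rewrite inE => /andP[/imsetP[b Gb ->] sCB].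
rewrite (eq_bigl (mem (b ^: G))); last first.
  move=> a; rewrite /=; apply/andP/idP => [[_ /eqP <-]|abG]; first exact: class_refl.
  by split; [apply: (subsetP sCB) | apply/eqP/class_eqP].
rewrite (eq_bigr (fun _ => #|'C_G[b]|)); last first.
  move=> a /imsetP[g Gg ->].
  by rewrite cent1J -{1}(conjGid Gg) -conjIg cardJg.
by rewrite sum_nat_const -index_cent1 mulnC Lagrange ?subsetIl.
Qed.

Theorem lemma2p2 (gT : finGroupType) (G H : {group gT}) (x : gT) :
  H <| G -> cyclic (G / H) -> x \in G -> generator (G / H) (coset H x) ->
  #|[set C in classes G | C \subset H :* x]| =
  #|[set C in classes G | integral_class G H C && (C \subset H)]|.
Proof.
move=> nHG cycGH Gx genX.
set X := coset H x.
have nG := normal_norm nHG; have sHG := normal_sub nHG.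
have XJ : forall g, g \in G -> X ^ coset H g = X.
  move=> g Gg; have XG : X \in G / H by apply: mem_quotient.
  have gG : coset H g \in G / H by apply: mem_quotient.
  have cXg : commute X (coset H g).
    by apply: (centsP (cyclic_abelian cycGH)).
  by rewrite conjgE cXg mulKg.
have HxE : H :* x = Aset G X.
  apply/setP=> y; rewrite /Aset [in RHS]inE; apply/idP/andP => [Hxy | [Gy /eqP yX]].
    have Gy : y \in G by case/rcosetP: Hxy => h Hh ->; apply: groupM => //; exact: (subsetP sHG).
    by split=> //; apply/eqP/rcoset_kercosetP; rewrite ?(subsetP nG).
  by apply/rcoset_kercosetP; rewrite ?(subsetP nG).
pose Q a := Aset G X :&: 'C[a] != set0.
have Qchar : forall a, a \in G -> (H * 'C_G[a] == G) = Q a.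
  move=> a Ga; apply/idP/set0Pn.
    move/eqP=> defG; have: x \in H * 'C_G[a] by rewrite defG.
    case/mulsgP => h c Hh /setIP[Gc Cc] xE.
    exists c; rewrite in_setI Cc andbT inE Gc /= /X xE.
    have Gh := subsetP sHG h Hh; rewrite morphM ?(subsetP nG) //=.
    by rewrite (coset_id Hh) mul1g.
  case=> c; rewrite in_setI inE => /andP[/andP[Gc /eqP cX] Cc].
  rewrite eqEsubset mul_subG ?subsetIl //=.
  apply/subsetP => g Gg.
  have: coset H g \in <[X]> by rewrite -(eqP genX) mem_quotient.
  case/cycleP => j gj.
  rewrite -(mulgKV (c ^+ j) g).
  apply: mem_mulg; last by rewrite in_setI !groupX.
  apply: coset_idr; first by rewrite (subsetP nG) // groupM ?groupV ?groupX.
  rewrite morphM ?morphV ?morphX ?(subsetP nG) ?groupV ?groupX //.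
  by rewrite /= gj cX mulgV.
have QJ : forall a g, g \in G -> Q (a ^ g) = Q a.
  suff QJ1: forall a g, g \in G -> Q a -> Q (a ^ g).
    move=> a g Gg; apply/idP/idP; last exact: QJ1.
    by move/(QJ1 _ g^-1 (groupVr Gg)); rewrite conjgK.
  move=> a g Gg /set0Pn[c]; rewrite in_setI inE => /andP[/andP[Gc /eqP cX] Cc].
  apply/set0Pn; exists (c ^ g).
  rewrite in_setI cent1J memJ_conjg Cc andbT inE groupJ //=.
  rewrite morphJ ?(subsetP nG) //=.
  by rewrite cX XJ.
pose S' := [set a in H | Q a].
have RHSE : [set C in classes G | integral_class G H C && (C \subset H)] =
            [set C in classes G | C \subset S'].
  apply/setP => C; rewrite !inE; case cC: (C \in classes G) => //=.
  rewrite /integral_class cC /=.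
  case/imsetP: cC => b Gb ->.
  rewrite /class_centralizing_subgroup /centralizing_subgroup.
  have := mem_repr_classes (mem_classes Gb).
  case/imsetP => g Gg ->.
  rewrite Qchar ?groupJ // QJ //.
  apply/andP/subsetP => [[Qb sbH] y /imsetP[h Gh ->] | sS].
    rewrite inE QJ // Qb andbT; apply: (subsetP sbH); exact: imset_f.
  split.
    by have := sS b (class_refl G b); rewrite inE => /andP[].
  by apply/subsetP => y /sS; rewrite inE => /andP[].
have step : forall a c, a \in G -> c \in G -> c \in 'C[a] -> coset H c = X ->
    #|'C_G[a]| = (#|G / H| * #|H :&: 'C[a]|)%N.
  move=> a c Ga Gc Cc cX.
  rewrite (cent_decomp a nHG) -sum_nat_const; apply: eq_bigr => u Gu.
  have: u \in <[X]> by rewrite -(eqP genX).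
  by case/cycleP=> j ->; rewrite -cX pow_card.
apply/eqP; rewrite -(eqn_pmul2r (cardG_gt0 G)); apply/eqP.
rewrite HxE RHSE !burnside_classes //; first last.
all: try (by apply/subsetP => a; rewrite inE => /andP[/(subsetP sHG)]).
all: try (by apply/subsetP => a; rewrite inE => /andP[]).
all: try (move=> a g; rewrite inE => /andP[Ha Qa] Gg;
  by rewrite inE memJ_norm ?(subsetP nG) // QJ // Qa andbT).
  move=> a g; rewrite inE => /andP[Ga /eqP aX] Gg.
  by rewrite inE groupJ //= morphJ ?(subsetP nG) //= aX XJ.
rewrite (eq_bigr (fun a => #|G / H| * #|H :&: 'C[a]|)%N); last first.
  move=> a; rewrite inE => /andP[Ga /eqP aX]; apply: (step a a) => //.
  exact/cent1P.
rewrite [RHS](eq_bigr (fun a => #|G / H| * #|H :&: 'C[a]|)%N); last first.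
  move=> a; rewrite inE => /andP[Ha /set0Pn[c]].
  rewrite in_setI inE => /andP[/andP[Gc /eqP cX] Cc].
  by apply: (step a c) => //; apply: (subsetP sHG).
rewrite -!big_distrr /=; congr (_ * _)%N.
rewrite [RHS](eq_bigr (fun a => #|Aset G X :&: 'C[a]|)); last first.
  move=> a; rewrite inE => /andP[Ha /set0Pn[c]].
  rewrite in_setI inE => /andP[/andP[Gc /eqP cX] Cc].
  by rewrite -[in RHS]cX -[coset H c]expg1 pow_card.
transitivity (\sum_(a in H) #|Aset G X :&: 'C[a]|).
  rewrite (eq_bigr _ (fun a _ => cardIC H 'C[a])) exchange_big /=.
  apply: eq_bigr => b _; rewrite cardIC; apply: eq_bigr => a _.
  by rewrite cent1C.
rewrite (bigID (fun a => Q a)) /= [X in _ + X = _]big1 ?addn0; last first.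
  by move=> a /andP[_]; rewrite negbK => /eqP ->; rewrite cards0.
by apply: eq_bigl => a; rewrite inE.
Qed.
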